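(* Let $X, Y \subseteq \omega$, let $\mathcal{A}$ be a pca, let $a_\bot \neq a_\top$ be elements of $\mathcal{A}$, let $\gamma : \omega \to \mathcal{A}$ be a partial numbering, and let $d$ be a $Y$-computable $(a_\bot, a_\top)$-decider for $X$. If $\gamma$ has $Y$-c.e. inequivalence, then $X \le_T Y$.
   Context: A pca is a set with a partial binary application operation containing distinct $\mathrm{s},\mathrm{k}$ with $\mathrm{k}ab\downarrow=a$, $\mathrm{s}ab\downarrow$, $\mathrm{s}abc\simeq(ac)(bc)$. A partial numbering of $\mathcal{A}$ is a surjective partial function $\gamma:\omega\rightharpoonup\mathcal{A}$. $\gamma$ has $Y$-c.e. inequivalence if there is a $Y$-c.e. relation $R\subseteq\omega^2$ whose restriction to $\mathrm{dom}(\gamma)^2$ equals $\{(n,m)\in\mathrm{dom}(\gamma)^2:\gamma(n)\neq\gamma(m)\}$. A function $d:\omega\to\omega$ is an $(a_\bot,a_\top)$-decider for $X$ if for all $n$: $n\notin X\Rightarrow\gamma(d(n))=a_\bot$, and $n\in X\Rightarrow\gamma(d(n))=a_\top$. *)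

(* Defs.v *)
From Stdlib Require Import List Arith.
Import ListNotations.

(* Subsets of omega are represented by their characteristic functions nat -> bool. *)

Inductive rec : Type :=
| RZero : rec
| RSucc : rec
| RProj : nat -> rec
| ROrac : rec
| RComp : rec -> list rec -> rec
| RPrec : rec -> rec -> rec        (* primitive recursion on the first argument *)
| RMu   : rec -> rec.              (* minimisation on the first argument *)

Inductive eval (Y : nat -> bool) : rec -> list nat -> nat -> Prop :=
| eZero v : eval Y RZero v 0
| eSucc v : eval Y RSucc v (S (hd 0 v))
| eProj i v : eval Y (RProj i) v (nth i v 0)
| eOrac v : eval Y ROrac v (if Y (hd 0 v) then 1 else 0)
| eComp f gs v ws y : evals Y gs v ws -> eval Y f ws y -> eval Y (RComp f gs) v y
| ePrec0 f g v y : eval Y f v y -> eval Y (RPrec f g) (0 :: v) y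
| ePrecS f g n v r y :
    eval Y (RPrec f g) (n :: v) r -> eval Y g (n :: r :: v) y ->
    eval Y (RPrec f g) (S n :: v) y
| eMu f v n :
    eval Y f (n :: v) 0 ->
    (forall m, m < n -> exists k, eval Y f (m :: v) (S k)) ->
    eval Y (RMu f) v n
with evals (Y : nat -> bool) : list rec -> list nat -> list nat -> Prop :=
| esNil v : evals Y [] v []
| esCons g gs v w ws : eval Y g v w -> evals Y gs v ws -> evals Y (g :: gs) v (w :: ws).

Definition computable_in (Y : nat -> bool) (f : nat -> nat) : Prop :=
  exists p, forall n, eval Y p [n] (f n).

Definition turing_le (X Y : nat -> bool) : Prop :=
  computable_in Y (fun n => if X n then 1 else 0).

Definition ce_rel_in (Y : nat -> bool) (R : nat -> nat -> Prop) : Prop :=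
  exists p, forall n m, R n m <-> exists y, eval Y p [n; m] y.

Definition appo {A : Type} (app : A -> A -> option A) (x y : option A) : option A :=
  match x, y with Some a, Some b => app a b | _, _ => None end.

Record pca := {
  pca_car :> Type;
  pca_app : pca_car -> pca_car -> option pca_car;
  pca_s : pca_car;
  pca_k : pca_car;
  pca_sk : pca_s <> pca_k;
  pca_kax : forall a b,
      appo pca_app (appo pca_app (Some pca_k) (Some a)) (Some b) = Some a;
  pca_sdef : forall a b,
      appo pca_app (appo pca_app (Some pca_s) (Some a)) (Some b) <> None;
  pca_sax : forall a b c,
      appo pca_app (appo pca_app (appo pca_app (Some pca_s) (Some a)) (Some b)) (Some c)
      = appo pca_app (appo pca_app (Some a) (Some c)) (appo pca_app (Some b) (Some c))
}.

Definition partial_numbering (A : Type) (gamma : nat -> option A) : Prop :=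
  forall a : A, exists n, gamma n = Some a.

Definition ce_inequivalence_in (Y : nat -> bool) {A : Type} (gamma : nat -> option A) : Prop :=
  exists R : nat -> nat -> Prop, ce_rel_in Y R /\
    forall n m, gamma n <> None -> gamma m <> None ->
      (R n m <-> exists a b, gamma n = Some a /\ gamma m = Some b /\ a <> b).

Definition decider {A : Type} (gamma : nat -> option A) (abot atop : A)
    (X : nat -> bool) (d : nat -> nat) : Prop :=
  forall n, (X n = false -> gamma (d n) = Some abot) /\
            (X n = true -> gamma (d n) = Some atop).

(* Main.v *)
Require Import Defs.
From Stdlib Require Import List Arith Lia Bool ClassicalEpsilon.
Import ListNotations.

Fixpoint eval_det Y p v y (d : eval Y p v y) {struct d} : forall y', eval Y p v y' -> y = y'
with evals_det Y gs v ws (d : evals Y gs v ws) {struct d} : forall ws', evals Y gs v ws' -> ws = ws'.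
Proof.
- destruct d as [ | | | | f gs v ws y E1 E2 | f g v y E | f g n v r y E1 E2 | f v n E1 E2];
  intros y' H'; inversion H'; subst; try reflexivity.
  + match goal with Hs : evals _ _ _ ?w |- _ => pose proof (evals_det _ _ _ _ E1 _ Hs) end. subst.
    match goal with Hs : eval _ f _ _ |- _ => exact (eval_det _ _ _ _ E2 _ Hs) end.
  + match goal with Hs : eval _ f _ _ |- _ => exact (eval_det _ _ _ _ E _ Hs) end.
  + match goal with Hs : eval _ (RPrec f g) _ _ |- _ => pose proof (eval_det _ _ _ _ E1 _ Hs) end. subst.
    match goal with Hs : eval _ g _ _ |- _ => exact (eval_det _ _ _ _ E2 _ Hs) end.
  + rename y' into n'.
    destruct (lt_eq_lt_dec n n') as [[Hlt|Heq]|Hgt]; [| exact Heq |].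
    * match goal with Hs : forall m, m < n' -> _ |- _ => destruct (Hs n Hlt) as [k dk] end.
      pose proof (eval_det _ _ _ _ E1 _ dk). discriminate.
    * destruct (E2 n' Hgt) as [k dk].
      match goal with Hs : eval _ f (n' :: v) 0 |- _ => pose proof (eval_det _ _ _ _ dk _ Hs) end. discriminate.
- destruct d as [|g gs v w ws E1 E2]; intros ws' H'; inversion H'; subst; try reflexivity.
  match goal with Hs : eval _ g _ _ |- _ => pose proof (eval_det _ _ _ _ E1 _ Hs) end.
  match goal with Hs : evals _ gs _ _ |- _ => pose proof (evals_det _ _ _ _ E2 _ Hs) end. subst. reflexivity.
Qed.
Definition PredP := RPrec RZero (RProj 0).
Definition IfZP := RPrec (RProj 0) (RProj 3).
Definition ifz a b c := RComp IfZP [a; b; c].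
Definition predp a := RComp PredP [a].
Definition succp a := RComp RSucc [a].
Definition projs k L := map RProj (seq k L).
Fixpoint constp k := match k with 0 => RZero | S k => succp (constp k) end.

Lemma eval_PredP Y x w : eval Y PredP (x :: w) (pred x).
Proof.
  induction x. - apply ePrec0. constructor.
  - eapply ePrecS. exact IHx. apply (eProj Y 0 (x :: pred x :: w)).
Qed.

Lemma eval_IfZP Y a b c : eval Y IfZP [a; b; c] (match a with 0 => b | S _ => c end).
Proof.
  induction a. - apply ePrec0. apply (eProj Y 0 [b;c]).
  - eapply ePrecS. exact IHa. apply (eProj Y 3).
Qed.

Lemma eval_ifz Y a b c u x y z : eval Y a u x -> eval Y b u y -> eval Y c u z ->
  eval Y (ifz a b c) u (match x with 0 => y | S _ => z end).
Proof. intros. eapply eComp; [repeat constructor; eauto | apply eval_IfZP]. Qed.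

Lemma eval_predp Y a u x : eval Y a u x -> eval Y (predp a) u (pred x).
Proof. intros. eapply eComp; [repeat constructor; eauto | apply eval_PredP]. Qed.

Lemma eval_succp Y a u x : eval Y a u x -> eval Y (succp a) u (S x).
Proof. intros. eapply eComp; [repeat constructor; eauto | apply eSucc]. Qed.

Lemma eval_constp Y k u : eval Y (constp k) u k.
Proof. induction k; simpl. constructor. apply eval_succp; auto. Qed.

Lemma evals_projs Y l u : evals Y (map RProj l) u (map (fun i => nth i u 0) l).
Proof. induction l; simpl; constructor; auto. constructor. Qed.

Lemma rebuild v : forall pre, map (fun i => nth i (pre ++ v) 0) (seq (length pre) (length v)) = v.
Proof.
  induction v as [|x v IH]; intros pre; simpl; auto.
  rewrite app_nth2 by lia. rewrite Nat.sub_diag. simpl. f_equal.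
  specialize (IH (pre ++ [x])). rewrite <- app_assoc in IH. simpl in IH.
  rewrite length_app in IH. simpl in IH. rewrite Nat.add_1_r in IH. exact IH.
Qed.

Lemma evals_projs_rebuild Y pre v L k : length pre = k -> length v = L ->
  evals Y (projs k L) (pre ++ v) v.
Proof.
  intros <- <-. unfold projs. pose proof (evals_projs Y (seq (length pre) (length v)) (pre ++ v)).
  rewrite rebuild in H. exact H.
Qed.

Lemma evals_Forall2 Y ws u xs : evals Y ws u xs <-> Forall2 (fun w x => eval Y w u x) ws xs.
Proof.
  split. - induction 1; constructor; auto.
  - induction 1; constructor; auto.
Qed.

Lemma evals_length Y gs v ws : evals Y gs v ws -> length ws = length gs.
Proof. induction 1; simpl; auto. Qed.

Lemma fold_ifz Y u inner z ws xs : Forall2 (fun w x => eval Y w u x) ws xs -> eval Y inner u z ->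
  eval Y (fold_right (fun w acc => ifz w RZero acc) inner ws) u
    (if existsb (Nat.eqb 0) xs then 0 else z).
Proof.
  intros H Hi. induction H; simpl; auto.
  pose proof (eval_ifz Y _ _ _ u _ 0 _ H (eZero _ _) IHForall2).
  destruct y; simpl in *; auto.
Qed.
Definition compT (tf : rec) (tgs : list rec) L :=
  let ws := map (fun tg => RComp tg (RProj 0 :: projs 1 L)) tgs in
  fold_right (fun w acc => ifz w RZero acc) (RComp tf (RProj 0 :: map predp ws)) ws.

Definition precG (tg : rec) L' :=
  ifz (RProj 1) RZero (RComp tg (RProj 2 :: RProj 0 :: predp (RProj 1) :: projs 3 L')).

Definition precT (tf tg : rec) L' :=
  RComp (RPrec tf (precG tg L')) (RProj 1 :: RProj 0 :: projs 2 L').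

Definition muX (tf : rec) L := RComp tf (RProj 2 :: RProj 0 :: projs 3 L).
Definition muStep (tf : rec) L :=
  ifz (RProj 1) (ifz (muX tf L) (succp RZero) (ifz (predp (muX tf L)) (succp (succp (RProj 0))) RZero)) (RProj 1).
Definition muT (tf : rec) L :=
  predp (RComp (RPrec RZero (muStep tf L)) (RProj 0 :: RProj 0 :: projs 1 L)).

Fixpoint T (p : rec) (L : nat) {struct p} : rec :=
  match p with
  | RZero => succp RZero
  | RSucc => succp (succp (RProj 1))
  | RProj i => succp (RProj (S i))
  | ROrac => succp (RComp ROrac [RProj 1])
  | RComp f gs => compT (T f (length gs)) (map (fun g => T g L) gs) L
  | RPrec f g => match L with 0 => RZero | S L' => precT (T f L') (T g (S (S L'))) L' end
  | RMu f => muT (T f (S L)) L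
  end.

Fixpoint rec_ind' (P : rec -> Prop) (H0 : P RZero) (H1 : P RSucc) (H2 : forall i, P (RProj i)) (H3 : P ROrac)
  (H4 : forall f gs, P f -> Forall P gs -> P (RComp f gs))
  (H5 : forall f g, P f -> P g -> P (RPrec f g)) (H6 : forall f, P f -> P (RMu f)) (p : rec) : P p :=
  let R := rec_ind' P H0 H1 H2 H3 H4 H5 H6 in
  match p with
  | RZero => H0 | RSucc => H1 | RProj i => H2 i | ROrac => H3
  | RComp f gs => H4 f gs (R f)
      ((fix F (l : list rec) : Forall P l := match l with [] => Forall_nil _ | g :: l' => Forall_cons _ (R g) (F l') end) gs)
  | RPrec f g => H5 f g (R f) (R g)
  | RMu f => H6 f (R f)
  end.
Fixpoint st (H : nat -> nat) c := match c with
  | 0 => 0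
  | S c => match st H c with
           | 0 => match H c with 0 => 1 | 1 => S (S c) | _ => 0 end
           | r => r end end.

Lemma st_zero H c : st H c = 0 -> forall m, m < c -> H m >= 2.
Proof.
  induction c; simpl; intros E m Hm. lia.
  destruct (st H c) eqn:Ec.
  - destruct (H c) as [|[|k]] eqn:Hc; try discriminate.
    assert (m < c \/ m = c) as [|] by lia; [apply IHc; auto| subst; lia].
  - discriminate.
Qed.

Lemma st_found H c m : st H c = S (S m) -> m < c /\ H m = 1 /\ forall m', m' < m -> H m' >= 2.
Proof.
  induction c; simpl; intros E. discriminate.
  destruct (st H c) eqn:Ec.
  - destruct (H c) as [|[|k]] eqn:Hc; try discriminate.
    injection E as <-. split; [lia|split; auto]. apply st_zero; auto.
  - destruct (IHc E) as (?&?&?). split; [lia|auto].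
Qed.

Lemma st_vals H c : st H c = 0 \/ st H c = 1 \/ exists m, st H c = S (S m).
Proof.
  induction c; simpl; auto.
  destruct (st H c) eqn:Ec.
  - destruct (H c) as [|[|k]]; eauto.
  - destruct IHc as [?|[?|?]]; eauto.
Qed.

Lemma st_complete H n : H n = 1 -> (forall m, m < n -> H m >= 2) -> forall c, n < c -> st H c = S (S n).
Proof.
  intros Hn Hlt.
  assert (Z : forall c, c <= n -> st H c = 0).
  { induction c; simpl; intros; auto. rewrite IHc by lia.
    specialize (Hlt c ltac:(lia)). destruct (H c) as [|[|k]]; lia. }
  induction c; intros Hc. lia.
  assert (c = n \/ n < c) as [->|] by lia.
  - simpl. rewrite Z by lia. rewrite Hn. reflexivity.
  - simpl. rewrite IHc by auto. reflexivity.
Qed.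

Lemma mu_eval Y tf L s v H : length v = L -> (forall i, eval Y tf (s :: i :: v) (H i)) ->
  eval Y (muT tf L) (s :: v) (pred (st H s)).
Proof.
  intros Hl HH.
  assert (In : forall c, eval Y (RPrec RZero (muStep tf L)) (c :: s :: v) (st H c)).
  { induction c. - apply ePrec0. constructor.
    - eapply ePrecS. exact IHc.
      assert (HX : eval Y (muX tf L) (c :: st H c :: s :: v) (H c)).
      { eapply eComp; [|apply HH].
        apply esCons. apply (eProj Y 2). apply esCons. apply (eProj Y 0).
        apply (evals_projs_rebuild Y [c; st H c; s]); auto. }
      pose proof (eval_ifz Y _ _ _ _ _ _ _ (eProj Y 1 _)
        (eval_ifz Y _ _ _ _ _ _ _ HX (eval_succp Y _ _ _ (eZero _ _))
           (eval_ifz Y _ _ _ _ _ _ _ (eval_predp Y _ _ _ HX)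
               (eval_succp Y _ _ _ (eval_succp Y _ _ _ (eProj Y 0 _))) (eZero _ _)))
        (eProj Y 1 _)) as E.
      simpl in E. unfold muStep. simpl.
      destruct (st H c); [|exact E]. destruct (H c) as [|[|k]]; exact E. }
  apply eval_predp. eapply eComp; [|apply In].
  apply esCons. apply (eProj Y 0). apply esCons. apply (eProj Y 0).
  apply (evals_projs_rebuild Y [s]); auto.
Qed.
Definition Spec Y p v y := y = 0 \/ exists y', y = S y' /\ eval Y p v y'.
Definition Good Y p := forall L s v, length v = L -> exists y, eval Y (T p L) (s :: v) y /\ Spec Y p v y.

Lemma evA Y s v L : length v = L -> evals Y (RProj 0 :: projs 1 L) (s :: v) (s :: v).
Proof. intros. apply esCons. apply (eProj Y 0). apply (evals_projs_rebuild Y [s]); auto. Qed.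

Lemma Forall2_map_l {A B C} (h : A -> B) (R : B -> C -> Prop) l xs :
  Forall2 (fun a x => R (h a) x) l xs -> Forall2 R (map h l) xs.
Proof. induction 1; simpl; constructor; auto. Qed.

Lemma Forall2_weak {A B} (R R' : A -> B -> Prop) l xs :
  (forall a b, R a b -> R' a b) -> Forall2 R l xs -> Forall2 R' l xs.
Proof. intros H. induction 1; constructor; auto. Qed.

Lemma spec_evals Y gs v xs : Forall2 (fun g x => Spec Y g v x) gs xs ->
  existsb (Nat.eqb 0) xs = false -> evals Y gs v (map pred xs).
Proof.
  induction 1; simpl; intros E. constructor.
  apply orb_false_iff in E as [E1 E2].
  destruct H as [->|(y'&->&Hy)]. discriminate. constructor; auto.
Qed.

Lemma prec_inner Y f g L' s v' : Good Y f -> Good Y g -> length v' = L' -> forall n, exists r,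
  eval Y (RPrec (T f L') (precG (T g (S (S L'))) L')) (n :: s :: v') r /\ Spec Y (RPrec f g) (n :: v') r.
Proof.
  intros Gf Gg Hl n. induction n.
  - destruct (Gf L' s v' Hl) as (y&Ey&Sy). exists y. split. apply ePrec0. exact Ey.
    destruct Sy as [->|(y'&->&E)]; [left; auto| right; exists y'; split; auto; apply ePrec0; auto].
  - destruct IHn as (r&Er&Sr).
    destruct (Gg (S (S L')) s (n :: pred r :: v') ltac:(simpl; lia)) as (z&Ez&Sz).
    assert (Ec : eval Y (RComp (T g (S (S L'))) (RProj 2 :: RProj 0 :: predp (RProj 1) :: projs 3 L'))
                  (n :: r :: s :: v') z).
    { eapply eComp; [|exact Ez]. apply esCons. apply (eProj Y 2). apply esCons. apply (eProj Y 0).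
      apply esCons. apply eval_predp. apply (eProj Y 1). apply (evals_projs_rebuild Y [n; r; s]); auto. }
    pose proof (eval_ifz Y _ _ _ _ _ _ _ (eProj Y 1 _) (eZero _ _) Ec) as E. simpl in E.
    exists (match r with 0 => 0 | S _ => z end). split.
    + eapply ePrecS. exact Er. exact E.
    + destruct Sr as [->|(r'&->&Er')]. left; auto.
      destruct Sz as [->|(y'&->&Ey')]. left; auto. right. exists y'. split; auto.
      eapply ePrecS; eauto.
Qed.

Lemma good_all Y p : Good Y p.
Proof.
  induction p as [| | i | | f gs IHf IHgs | f g IHf IHg | f IHf] using rec_ind';
  intros L s v Hl; simpl.
  - eexists. split. apply eval_succp. constructor. right. eexists; split; eauto. constructor.
  - eexists. split. apply eval_succp, eval_succp. apply (eProj Y 1). right. eexists; split; [reflexivity|].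
    destruct v; apply eSucc.
  - eexists. split. apply eval_succp. apply (eProj Y (S i)). right. exists (nth i v 0); split; auto. apply eProj.
  - destruct v as [|x v]; (eexists; split;
      [apply eval_succp; eapply eComp; [apply esCons; [apply (eProj Y 1)|apply esNil] | apply eOrac]
      | right; eexists; split; [reflexivity| simpl; apply eOrac]]).
  - assert (HX : exists xs, Forall2 (fun g x => eval Y (RComp (T g L) (RProj 0 :: projs 1 L)) (s :: v) x
                   /\ Spec Y g v x) gs xs).
    { clear IHf. induction IHgs as [|g gs Hg Hgs IH]. exists []; constructor.
      destruct IH as [xs Hxs]. destruct (Hg L s v Hl) as (x&Ex&Sx).
      exists (x :: xs). constructor; auto. split; auto. eapply eComp; [apply evA; auto|exact Ex]. }
    destruct HX as [xs Hxs].
    assert (Hlen : length (map pred xs) = length gs).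
    { rewrite length_map. symmetry. eapply Forall2_length; eauto. }
    destruct (IHf _ s _ Hlen) as (z&Ez&Sz).
    unfold compT. cbv zeta. rewrite (map_map (fun g => T g L) (fun tg => RComp tg (RProj 0 :: projs 1 L))).
    assert (HF : Forall2 (fun w x => eval Y w (s :: v) x)
                 (map (fun g => RComp (T g L) (RProj 0 :: projs 1 L)) gs) xs).
    { apply Forall2_map_l. eapply Forall2_weak; [|exact Hxs]. simpl. tauto. }
    assert (Ei : eval Y (RComp (T f (length gs)) (RProj 0 :: map predp
                   (map (fun g => RComp (T g L) (RProj 0 :: projs 1 L)) gs))) (s :: v) z).
    { eapply eComp; [|exact Ez]. apply esCons. apply (eProj Y 0).
      clear -HF. induction HF; simpl; constructor; auto. apply eval_predp; auto. }
    pose proof (fold_ifz Y _ _ _ _ _ HF Ei) as E.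
    eexists. split. exact E.
    destruct (existsb (Nat.eqb 0) xs) eqn:Eb. left; auto.
    destruct Sz as [->|(y'&->&Ey')]. left; auto. right. exists y'. split; auto.
    eapply eComp; [|exact Ey']. apply spec_evals; auto.
    eapply Forall2_weak; [|exact Hxs]. simpl. tauto.
  - destruct L as [|L']. exists 0. split. constructor. left; auto.
    destruct v as [|n v']. discriminate. simpl in Hl. injection Hl as Hl.
    destruct (prec_inner Y f g L' s v' IHf IHg Hl n) as (r&Er&Sr).
    exists r. split; auto. unfold precT. eapply eComp; [|exact Er].
    apply esCons. apply (eProj Y 1). apply esCons. apply (eProj Y 0).
    apply (evals_projs_rebuild Y [s; n]); auto.
  - assert (HH : forall i, {x | eval Y (T f (S L)) (s :: i :: v) x /\ Spec Y f (i :: v) x}).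
    { intros i. apply constructive_indefinite_description. apply IHf. simpl; lia. }
    set (H := fun i => proj1_sig (HH i)).
    pose proof (mu_eval Y (T f (S L)) L s v H Hl (fun i => proj1 (proj2_sig (HH i)))) as E.
    eexists. split. exact E.
    destruct (st_vals H s) as [E0|[E0|[m E0]]]; rewrite E0; try (left; reflexivity).
    right. exists m. split; auto. apply st_found in E0 as (_&Hm&Hlt).
    apply eMu.
    + destruct (proj2 (proj2_sig (HH m))) as [Z|(y'&Y'&Ey')]; idtac.
      * fold (H m) in Z. rewrite Hm in Z; discriminate.
      * fold (H m) in Y'. rewrite Hm in Y'. injection Y' as <-. exact Ey'.
    + intros m' Hm'. specialize (Hlt m' Hm').
      destruct (proj2 (proj2_sig (HH m'))) as [Z|(y'&Y'&Ey')]; idtac.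
      * fold (H m') in Z. lia.
      * fold (H m') in Y'. destruct y' as [|k]. lia. eauto.
Qed.
Lemma bound_lemma (P : nat -> nat -> Prop) n : (forall m, m < n -> exists s0, forall s, s0 <= s -> P m s) ->
  exists S0, forall m, m < n -> forall s, S0 <= s -> P m s.
Proof.
  induction n; intros H. exists 0; intros; lia.
  destruct IHn as [S0 HS0]. intros m Hm; apply H; lia.
  destruct (H n ltac:(lia)) as [s1 Hs1]. exists (max S0 s1). intros m Hm s Hs.
  assert (m < n \/ m = n) as [Hlt| ->] by lia. apply HS0; lia. apply Hs1; lia.
Qed.

Lemma precG_eval Y tg L' s n r v' z : length v' = L' -> eval Y tg (s :: n :: pred r :: v') z ->
  eval Y (precG tg L') (n :: r :: s :: v') (match r with 0 => 0 | S _ => z end).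
Proof.
  intros Hl Ez.
  assert (Ec : eval Y (RComp tg (RProj 2 :: RProj 0 :: predp (RProj 1) :: projs 3 L'))
                  (n :: r :: s :: v') z).
  { eapply eComp; [|exact Ez]. apply esCons. apply (eProj Y 2). apply esCons. apply (eProj Y 0).
    apply esCons. apply eval_predp. apply (eProj Y 1). apply (evals_projs_rebuild Y [n; r; s]); auto. }
  exact (eval_ifz Y _ _ _ _ _ _ _ (eProj Y 1 _) (eZero _ _) Ec).
Qed.

Lemma precT_wrap Y tf tg L' s n v' r : length v' = L' ->
  eval Y (RPrec tf (precG tg L')) (n :: s :: v') r -> eval Y (precT tf tg L') (s :: n :: v') r.
Proof.
  intros Hl E. unfold precT. eapply eComp; [|exact E].
  apply esCons. apply (eProj Y 1). apply esCons. apply (eProj Y 0).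
  apply (evals_projs_rebuild Y [s; n]); auto.
Qed.

Lemma existsb_S ws : existsb (Nat.eqb 0) (map S ws) = false.
Proof. induction ws; simpl; auto. Qed.

Lemma map_pred_S ws : map pred (map S ws) = ws.
Proof. induction ws; simpl; f_equal; auto. Qed.

Fixpoint comp_eval Y p v y (d : eval Y p v y) {struct d} : forall L, length v = L ->
  exists s0, forall s, s0 <= s -> eval Y (T p L) (s :: v) (S y)
with comp_evals Y gs v ws (d : evals Y gs v ws) {struct d} : forall L, length v = L ->
  exists s0, forall s, s0 <= s ->
    Forall2 (fun g x => eval Y (RComp (T g L) (RProj 0 :: projs 1 L)) (s :: v) x) gs (map S ws).
Proof.
- destruct d as [ v | v | i v | v | f gs v ws y E1 E2 | f g v y E | f g n v r y E1 E2 | f v n E1 E2];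
  intros L Hl.
  + exists 0. intros s _. apply eval_succp. constructor.
  + exists 0. intros s _. simpl. destruct v; apply eval_succp, eval_succp; apply (eProj Y 1).
  + exists 0. intros s _. apply eval_succp. apply (eProj Y (S i)).
  + exists 0. intros s _. simpl. destruct v; apply eval_succp; (eapply eComp;
      [apply esCons; [apply (eProj Y 1)|apply esNil] | exact (eOrac Y _)]).
  + destruct (comp_evals _ _ _ _ E1 L Hl) as [s0 Hs0].
    pose proof (evals_length _ _ _ _ E1) as Hlen.
    destruct (comp_eval _ _ _ _ E2 (length gs) Hlen) as [s1 Hs1].
    exists (max s0 s1). intros s Hs. simpl. unfold compT. cbv zeta.
    rewrite (map_map (fun g => T g L) (fun tg => RComp tg (RProj 0 :: projs 1 L))).
    specialize (Hs0 s ltac:(lia)). specialize (Hs1 s ltac:(lia)).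
    assert (HF : Forall2 (fun w x => eval Y w (s :: v) x)
                 (map (fun g => RComp (T g L) (RProj 0 :: projs 1 L)) gs) (map S ws)).
    { apply Forall2_map_l. exact Hs0. }
    assert (Ei : eval Y (RComp (T f (length gs)) (RProj 0 :: map predp
                   (map (fun g => RComp (T g L) (RProj 0 :: projs 1 L)) gs))) (s :: v) (S y)).
    { eapply eComp; [|exact Hs1]. apply esCons. apply (eProj Y 0).
      rewrite <- (map_pred_S ws).
      clear -HF. induction HF; simpl; constructor. apply eval_predp; exact H. exact IHHF. }
    pose proof (fold_ifz Y _ _ _ _ _ HF Ei) as E. rewrite existsb_S in E. exact E.
  + destruct L as [|L']. discriminate. simpl in Hl. injection Hl as Hl.
    destruct (comp_eval _ _ _ _ E L' Hl) as [s0 Hs0].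
    exists s0. intros s Hs. simpl. apply precT_wrap. exact Hl. apply ePrec0. apply Hs0. exact Hs.
  + destruct L as [|L']. discriminate. simpl in Hl. injection Hl as Hl.
    destruct (comp_eval _ _ _ _ E1 (S L') ltac:(simpl; lia)) as [s0 Hs0].
    destruct (comp_eval _ _ _ _ E2 (S (S L')) ltac:(simpl; lia)) as [s1 Hs1].
    exists (max s0 s1). intros s Hs. simpl.
    destruct (prec_inner Y f g L' s v (good_all Y f) (good_all Y g) Hl n) as (r0&Er0&_).
    pose proof (precT_wrap Y _ _ _ _ _ _ _ Hl Er0) as W.
    pose proof (eval_det _ _ _ _ W _ (Hs0 s ltac:(lia))) as ->.
    apply precT_wrap. exact Hl. eapply ePrecS. exact Er0.
    exact (precG_eval Y _ L' s n (S r) v (S y) Hl (Hs1 s ltac:(lia))).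
  + destruct (comp_eval _ _ _ _ E1 (S L) ltac:(simpl; lia)) as [s0 Hs0].
    assert (IH2 : forall m, m < n -> exists k s1, forall s, s1 <= s ->
               eval Y (T f (S L)) (s :: m :: v) (S (S k))).
    { intros m Hm. destruct (E2 m Hm) as [k dk]. exists k.
      exact (comp_eval _ _ _ _ dk (S L) ltac:(simpl; lia)). }
    clear E2 E1.
    assert (IH3 : forall m, m < n -> exists s1, forall s, s1 <= s ->
               exists k, eval Y (T f (S L)) (s :: m :: v) (S (S k))).
    { intros m Hm. destruct (IH2 m Hm) as (k&s1&Hs1). exists s1. intros s Hs. exists k. apply Hs1; auto. }
    destruct (bound_lemma _ n IH3) as [S0 HS0].
    exists (max (S n) (max s0 S0)). intros s Hs. simpl.
    assert (HH : forall i, {x | eval Y (T f (S L)) (s :: i :: v) x}).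
    { intros i. apply constructive_indefinite_description.
      destruct (good_all Y f (S L) s (i :: v) ltac:(simpl; lia)) as (x&Ex&_). exists x; exact Ex. }
    set (H := fun i => proj1_sig (HH i)).
    pose proof (mu_eval Y (T f (S L)) L s v H Hl (fun i => proj2_sig (HH i))) as E.
    rewrite (st_complete H n) in E.
    * exact E.
    * exact (eval_det _ _ _ _ (proj2_sig (HH n)) _ (Hs0 s ltac:(lia))).
    * intros m Hm. destruct (HS0 m Hm s ltac:(lia)) as [k Ek].
      pose proof (eval_det _ _ _ _ (proj2_sig (HH m)) _ Ek). unfold H. lia.
    * lia.
- destruct d as [v | g gs v w ws E1 E2]; intros L Hl.
  + exists 0. intros. constructor.
  + destruct (comp_eval _ _ _ _ E1 L Hl) as [s0 Hs0].
    destruct (comp_evals _ _ _ _ E2 L Hl) as [s1 Hs1].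
    exists (max s0 s1). intros s Hs. simpl. constructor.
    * eapply eComp. apply evA; exact Hl. apply Hs0; lia.
    * apply Hs1; lia.
Qed.
Lemma least_zero (f : nat -> nat) s : f s = 0 -> exists m, f m = 0 /\ forall k, k < m -> f k <> 0.
Proof.
  revert s. induction s as [s IH] using (well_founded_induction Nat.lt_wf_0). intros Hs.
  destruct (excluded_middle_informative (exists k, k < s /\ f k = 0)) as [(k&Hk&Fk)|Hn].
  - exact (IH k Hk Fk).
  - exists s. split; auto. intros k Hk Fk. apply Hn; eauto.
Qed.

Theorem theorem3p7 (X Y : nat -> bool) (A : pca) (abot atop : A)
  (gamma : nat -> option A) (d : nat -> nat) :
  abot <> atop ->
  partial_numbering A gamma ->
  computable_in Y d ->
  decider gamma abot atop X d ->
  ce_inequivalence_in Y gamma ->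
  turing_le X Y.
Proof.
  intros Hne Hpn [dp Hd] Hdec [R [[p Hp] HR]].
  destruct (Hpn abot) as [nbot Hnb]. destruct (Hpn atop) as [ntop Hnt].
  set (P := T p 2).
  set (Dn := RComp dp [RProj 1]).
  set (Z := ifz (RComp P [RProj 0; Dn; constp nbot])
               (ifz (RComp P [RProj 0; Dn; constp ntop]) (succp RZero) RZero) RZero).
  exists (ifz (RComp P [RMu Z; RComp dp [RProj 0]; constp nbot]) RZero (succp RZero)).
  intros n.
  assert (HBs : forall s, {x | eval Y P (s :: [d n; nbot]) x /\ Spec Y p [d n; nbot] x}).
  { intros s. apply constructive_indefinite_description. apply good_all. reflexivity. }
  assert (HTs : forall s, {x | eval Y P (s :: [d n; ntop]) x /\ Spec Y p [d n; ntop] x}).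
  { intros s. apply constructive_indefinite_description. apply good_all. reflexivity. }
  set (HB := fun s => proj1_sig (HBs s)). set (HT := fun s => proj1_sig (HTs s)).
  set (Zv := fun s => match HB s with 0 => match HT s with 0 => 1 | _ => 0 end | _ => 0 end).
  assert (EZ : forall s, eval Y Z (s :: [n]) (Zv s)).
  { intros s. apply eval_ifz; [| apply eval_ifz |].
    - eapply eComp; [|exact (proj1 (proj2_sig (HBs s)))].
      apply esCons. apply (eProj Y 0). apply esCons. eapply eComp. apply esCons. apply (eProj Y 1). apply esNil.
      apply Hd. apply esCons. apply eval_constp. apply esNil.
    - eapply eComp; [|exact (proj1 (proj2_sig (HTs s)))].
      apply esCons. apply (eProj Y 0). apply esCons. eapply eComp. apply esCons. apply (eProj Y 1). apply esNil.
      apply Hd. apply esCons. apply eval_constp. apply esNil.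
    - apply eval_succp. constructor.
    - constructor.
    - constructor. }
  assert (Gd : forall m, gamma m <> None -> R (d n) m <-> exists a b, gamma (d n) = Some a /\ gamma m = Some b /\ a <> b).
  { intros m Hm. apply HR; auto. destruct (Hdec n) as [H1 H2]. destruct (X n); [rewrite H2|rewrite H1]; auto; discriminate. }
  assert (Rb : forall y, eval Y p [d n; nbot] y -> X n = true).
  { intros y Ey. assert (HRb : R (d n) nbot) by (apply Hp; eauto).
    apply Gd in HRb; [|rewrite Hnb; discriminate]. destruct HRb as (a&b&Ea&Eb&Nab).
    destruct (X n) eqn:Xn; auto. destruct (Hdec n) as [H1 _]. rewrite H1 in Ea by auto.
    rewrite Hnb in Eb. congruence. }
  assert (Rt : forall y, eval Y p [d n; ntop] y -> X n = false).
  { intros y Ey. assert (HRt : R (d n) ntop) by (apply Hp; eauto).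
    apply Gd in HRt; [|rewrite Hnt; discriminate]. destruct HRt as (a&b&Ea&Eb&Nab).
    destruct (X n) eqn:Xn; auto. destruct (Hdec n) as [_ H2]. rewrite H2 in Ea by auto.
    rewrite Hnt in Eb. congruence. }
  assert (Ex : exists s, Zv s = 0).
  { destruct (X n) eqn:Xn.
    - assert (HRb : R (d n) nbot).
      { apply Gd. rewrite Hnb; discriminate. exists atop, abot. destruct (Hdec n) as [_ H2].
        rewrite H2 by auto. auto. }
      apply Hp in HRb as [y Ey]. destruct (comp_eval _ _ _ _ Ey 2 eq_refl) as [s0 Hs0].
      exists s0. pose proof (eval_det _ _ _ _ (proj1 (proj2_sig (HBs s0))) _ (Hs0 s0 (le_n _))) as E.
      unfold Zv, HB. rewrite E. reflexivity.
    - assert (HRt : R (d n) ntop).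
      { apply Gd. rewrite Hnt; discriminate. exists abot, atop. destruct (Hdec n) as [H1 _].
        rewrite H1 by auto. auto. }
      apply Hp in HRt as [y Ey]. destruct (comp_eval _ _ _ _ Ey 2 eq_refl) as [s0 Hs0].
      exists s0. pose proof (eval_det _ _ _ _ (proj1 (proj2_sig (HTs s0))) _ (Hs0 s0 (le_n _))) as E.
      unfold Zv, HT. rewrite E. destruct (HB s0); reflexivity. }
  destruct Ex as [s1 Hs1]. destruct (least_zero Zv s1 Hs1) as (m&Zm&Hlt).
  assert (EM : eval Y (RMu Z) [n] m).
  { apply eMu. rewrite <- Zm. apply EZ.
    intros k Hk. exists 0. specialize (Hlt k Hk). pose proof (EZ k) as E.
    assert (Zv k = 1) as <- by (unfold Zv in *; destruct (HB k), (HT k); congruence). exact E. }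
  assert (EF : eval Y (RComp P [RMu Z; RComp dp [RProj 0]; constp nbot]) [n] (HB m)).
  { eapply eComp; [|exact (proj1 (proj2_sig (HBs m)))].
    apply esCons. exact EM. apply esCons. eapply eComp. apply esCons. apply (eProj Y 0). apply esNil.
    apply Hd. apply esCons. apply eval_constp. apply esNil. }
  pose proof (eval_ifz Y _ _ _ _ _ _ _ EF (eZero _ _) (eval_succp Y _ _ _ (eZero _ _))) as E.
  replace (if X n then 1 else 0) with (match HB m with 0 => 0 | S _ => 1 end). exact E.
  destruct (HB m) eqn:Hb.
  - unfold Zv in Zm. rewrite Hb in Zm.
    destruct (proj2 (proj2_sig (HTs m))) as [Z0|(y&Ey&Ev)].
    + fold (HT m) in Z0. rewrite Z0 in Zm. discriminate.
    + rewrite (Rt y Ev). reflexivity.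
  - destruct (proj2 (proj2_sig (HBs m))) as [Z0|(y&Ey&Ev)].
    + fold (HB m) in Z0. congruence.
    + rewrite (Rb y Ev). reflexivity.
Qed.
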